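(* Let $G$ be a connected finite simple graph, $\mathcal{N}G$ its normal graph algebra over a field $\mathbb{F}$ of characteristic not $2$, and let $\mathfrak{e}=[a,b]$ be an edge of $G$. Then there exists $u\in U_G$ with $u^2=\mathfrak{e}$ if and only if one of the following holds: (1) $\mathfrak{e}$ lies in an odd cycle and $G-\mathfrak{e}$ is bipartite; (2) $\mathfrak{e}$ is a bridge and at least one connected component of $G-\mathfrak{e}$ is bipartite.
   Context: For a finite simple graph $G$ with vertex set $VG$ and edge set $EG$ (edge with endpoints $x,y$ written $[x,y]$), the normal graph algebra $\mathcal{N}G$ is the $\mathbb{F}$-vector space $U_G\oplus\mathfrak{Z}_G$, where $U_G$ has basis $VG$ and $\mathfrak{Z}_G$ has basis $EG$, with commutative bilinear product determined by: for distinct vertices $x,y$, $xy=[x,y]$ if adjacent and $0$ otherwise; $x^2=\sum_{y\sim x}[x,y]$; all products involving an element of $\mathfrak{Z}_G$ are $0$. Equivalently, for $u=\sum_x\theta_x x$, $u^2=\sum_{[x,y]\in EG}(\theta_x+\theta_y)^2[x,y]$. $G-\mathfrak{e}$ denotes $G$ with the edge $\mathfrak{e}$ removed (vertices kept). *)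

(* Defs.v *)
From mathcomp Require Import all_boot all_order all_algebra.
Set Implicit Arguments. Unset Strict Implicit. Unset Printing Implicit Defensive.
Import GRing.Theory.
Local Open Scope ring_scope.

(* A finite simple graph: vertex set T (finType), adjacency relation e,
   assumed symmetric and irreflexive.  The edge [x,y] is identified with
   the unordered pair [set x; y]. *)
Definition simple_graph (T : finType) (e : rel T) : Prop :=
  irreflexive e /\ symmetric e.

Definition connected_graph (T : finType) (e : rel T) : Prop :=
  forall x y : T, connect e x y.

Definition remove_edge (T : finType) (e : rel T) (a b : T) : rel T :=
  [rel x y | e x y && ([set x; y] != [set a; b])].

Definition bipartite (T : finType) (e : rel T) : Prop :=
  exists c : T -> bool, forall x y, e x y -> c x != c y.

Definition component_bipartite (T : finType) (e : rel T) (v : T) : Prop :=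
  exists c : T -> bool, forall x y, connect e v x -> connect e v y ->
    e x y -> c x != c y.

Definition on_odd_cycle (T : finType) (e : rel T) (a b : T) : Prop :=
  exists s : seq T, [/\ cycle e s, uniq s, (3 <= size s)%N & odd (size s)] /\
    (a \in s) && ((next s a == b) || (next s b == a)).

Definition is_bridge (T : finType) (e : rel T) (a b : T) : Prop :=
  ~~ connect (remove_edge e a b) a b.

(* The normal graph algebra NG = U_G (+) Z_G.  An element of U_G is its
   coordinate vector on the basis VG; an element of Z_G is its coordinate
   function on edges (only values on adjacent pairs are meaningful).
   Coefficient of the edge [x,y] in the product p*q of basis vertices:
   p <> q : [p,q] if adjacent, 0 otherwise;  p^2 = sum_{z ~ p} [p,z]. *)
Definition basis_prod_coef (T : finType) (e : rel T) (F : nzRingType)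
  (p q x y : T) : F :=
  if p == q then (if (p == x) || (p == y) then 1 else 0)
  else (if e p q && ([set p; q] == [set x; y]) then 1 else 0).

Definition UG_mul (T : finType) (e : rel T) (F : nzRingType)
  (u v : T -> F) : T -> T -> F :=
  fun x y => \sum_(p : T) \sum_(q : T) u p * v q * @basis_prod_coef T e F p q x y.

Definition ZG_edge (T : finType) (F : nzRingType) (a b : T) : T -> T -> F :=
  fun x y => if [set x; y] == [set a; b] then 1 else 0.

Definition ZG_eq (T : finType) (e : rel T) (F : nzRingType)
  (z w : T -> T -> F) : Prop :=
  forall x y, e x y -> z x y = w x y.

(* Main.v *)
Require Import Defs.
From mathcomp Require Import all_boot all_order all_algebra.
Set Implicit Arguments. Unset Strict Implicit. Unset Printing Implicit Defensive.
Import GRing.Theory.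
Local Open Scope ring_scope.

Lemma set2_eqE (T : finType) (p q x y : T) :
  ([set p; q] == [set x; y]) = ((p == x) && (q == y)) || ((p == y) && (q == x)).
Proof.
apply/idP/idP.
  move/eqP=> E.
  have hp : p \in [set x; y] by rewrite -E set21.
  have hq : q \in [set x; y] by rewrite -E set22.
  have hx : x \in [set p; q] by rewrite E set21.
  have hy : y \in [set p; q] by rewrite E set22.
  move: hp hq hx hy; rewrite !inE.
  by do 4 (case/orP => /eqP ?); subst; rewrite ?eqxx ?orbT.
by case/orP => /andP[/eqP-> /eqP->] //; rewrite setUC.
Qed.

Lemma connect_ind' (T : finType) (r : rel T) (v : T) (P : T -> Prop) :
  P v -> (forall x y, connect r v x -> r x y -> P x -> P y) ->
  forall x, connect r v x -> P x.
Proof.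
move=> Pv IH x /connectP [p]; elim/last_ind: p x => [|p y IHp] x /=.
  by move=> _ ->.
rewrite rcons_path last_rcons => /andP[pp rl] ->.
apply: (IH (last v p)) => //; first by apply/connectP; exists p.
exact: IHp.
Qed.

Lemma path_parity (T : finType) (r : rel T) (c : T -> bool) :
  (forall x y, r x y -> c x != c y) ->
  forall x p, path r x p -> c (last x p) = c x (+) odd (size p).
Proof.
move=> hc x p; elim: p x => [|y p IH] x /=; first by rewrite addbF.
case/andP=> rxy /IH ->; move: (hc _ _ rxy).
by case: (c x); case: (c y); case: (odd (size p)).
Qed.

Lemma next_last_uniq (T : eqType) (a : T) (p : seq T) :
  uniq (a :: p) -> next (a :: p) (last a p) = a.
Proof.
move=> u.
have -> : last a p = prev (a :: p) a.
  rewrite prev_nth mem_head /=.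
  case/andP: u => na _; rewrite memNindex //.
  by rewrite (last_nth a).
by rewrite next_prev.
Qed.

Lemma remove_edge_sym (T : finType) (e : rel T) a b :
  symmetric e -> symmetric (remove_edge e a b).
Proof. by move=> s x y; rewrite /remove_edge /= (s x y) setUC. Qed.


Lemma coefE (T : finType) (e : rel T) (F : nzRingType) (p q x y : T) :
  symmetric e -> e x y -> x != y ->
  basis_prod_coef e F p q x y =
  (((p == x) || (p == y)) && ((q == x) || (q == y)))%:R.
Proof.
move=> se exy nxy; rewrite /basis_prod_coef set2_eqE.
have [<-|npq] := eqVneq p q.
  by case: (p == x); case: (p == y).
have [epx|npx] := eqVneq p x; have [epy|npy] := eqVneq p y;
  have [eqx|nqx] := eqVneq q x; have [eqy|nqy] := eqVneq q y;
  subst => //=; rewrite ?eqxx ?andbT ?andbF ?(se y x) ?exy //=.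
all: try by rewrite eq_sym in npq; rewrite npq.
all: try by rewrite (negbTE nxy).
all: try by rewrite eq_sym (negbTE nxy).
all: by rewrite eqxx in npq.
Qed.

Lemma sum_delta2 (T : finType) (F : nzRingType) (f : T -> F) (x y : T) :
  x != y -> \sum_p f p * ((p == x) || (p == y))%:R = f x + f y.
Proof.
move=> nxy; rewrite (bigD1 x) //= eqxx mulr1 (bigD1 y) /=; last by rewrite eq_sym.
rewrite eqxx orbT mulr1 big1 ?addr0 ?addrA // => p /andP[npy npx].
by rewrite (negbTE npx) (negbTE npy) mulr0.
Qed.

Lemma UG_mul_sq (T : finType) (e : rel T) (F : comNzRingType) (u : T -> F) x y :
  symmetric e -> e x y -> x != y -> UG_mul e u u x y = (u x + u y) ^+ 2.
Proof.
move=> se exy nxy; rewrite /UG_mul.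
under eq_bigr => p _ do under eq_bigr => q _ do
  rewrite coefE // -mulnb natrM mulrACA.
under eq_bigr => p _ do rewrite -mulr_sumr sum_delta2 //.
by rewrite -mulr_suml sum_delta2 // expr2 mulrC.
Qed.


Lemma rem_E (T : finType) (e : rel T) a b x y :
  remove_edge e a b x y = e x y && ~~ (((x == a) && (y == b)) || ((x == b) && (y == a))).
Proof. by rewrite /remove_edge /= set2_eqE. Qed.

Lemma reach_ab (T : finType) (e : rel T) a b v :
  connected_graph e ->
  connect (remove_edge e a b) v a \/ connect (remove_edge e a b) v b.
Proof.
move=> cg.
suff H : forall x, connect e v x -> connect (remove_edge e a b) v x \/
   connect (remove_edge e a b) v a \/ connect (remove_edge e a b) v b.
  by case: (H a (cg v a)) => [|[]]; auto.
apply: connect_ind'; first by left.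
move=> x y _ exy [h|h]; last by right.
case e'xy: (remove_edge e a b x y).
  by left; apply: connect_trans h (connect1 e'xy).
move: e'xy; rewrite rem_E exy /= => /negbFE.
by case/orP=> /andP[/eqP ex _]; subst; auto.
Qed.

Lemma neg_ne (F : fieldType) (w : F) : (2%:R : F) != 0 -> w != 0 -> - w != w.
Proof.
move=> h2 nz; apply/eqP=> h.
have : w *+ 2 = 0 by rewrite mulr2n -{1}h addNr.
by rewrite -mulr_natl => /eqP; rewrite mulf_eq0 (negbTE h2) (negbTE nz).
Qed.


Lemma forward (F : fieldType) (T : finType) (e : rel T) (a b : T) :
  (2%:R : F) != 0 ->
  simple_graph e -> connected_graph e -> e a b ->
  (exists u : T -> F, ZG_eq e (UG_mul e u u) (ZG_edge F a b)) ->
  ((on_odd_cycle e a b /\ bipartite (remove_edge e a b)) \/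
   (is_bridge e a b /\
    exists v : T, component_bipartite (remove_edge e a b) v)).
Proof.
move=> h2 [irr se] cg eab [u Hu].
have neq x y : e x y -> x != y.
  by move=> exy; apply: contraTneq exy => ->; rewrite irr.
have Hd x y : e x y -> (u x + u y) ^+ 2 = ZG_edge F a b x y.
  by move=> exy; rewrite -(UG_mul_sq u se exy (neq _ _ exy)); apply: Hu.
pose e' := remove_edge e a b.
have He' x y : e' x y -> u y = - u x.
  move=> h; move: (h); rewrite /e' rem_E => /andP[exy nh].
  move: (Hd x y exy); rewrite /ZG_edge set2_eqE (negbTE nh).
  move/eqP; rewrite expf_eq0 /= addrC addr_eq0 => /eqP //.
have Hab : (u a + u b) ^+ 2 = 1 by rewrite Hd // /ZG_edge eqxx.
have sab : u a + u b != 0.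
  apply/eqP => h; move: Hab; rewrite h expr2 mulr0 => /eqP; rewrite eq_sym oner_eq0.
  by [].
have pm v x : connect e' v x -> u x = u v \/ u x = - u v.
  move: x; apply: connect_ind'; first by left.
  move=> x y _ /He' -> [->|->]; [by right | by left; rewrite opprK].
have comp v : u v != 0 -> component_bipartite e' v.
  move=> nz; exists (fun x => u x == u v) => x y cx cy /He' ->.
  case: (pm v x cx) => ->; rewrite ?opprK eqxx ?(negbTE (neg_ne h2 nz)) //.
have nab := neq a b eab.
case cab: (connect e' a b); last first.
  right; split; first by rewrite /is_bridge cab.
  have [ua0|ua0] := eqVneq (u a) 0; last by exists a; apply: comp.
  exists b; apply: comp; by move: sab; rewrite ua0 add0r.
left.
have allc x : connect e' a x.
  have : connect e a x := cg a x.
  move: x; apply: connect_ind' => // x y _ exy h.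
  case e'xy: (e' x y); first by apply: connect_trans h (connect1 e'xy).
  move: e'xy; rewrite /e' rem_E exy /= => /negbFE.
  by case/orP=> /andP[_ /eqP ->].
have ua0 : u a != 0.
  apply/eqP=> h; case: (pm a b cab) => hb; move: sab; rewrite hb h ?oppr0 addr0 eqxx //.
have ub : u b = u a.
  case: (pm a b cab) => // hb; move: sab; rewrite hb subrr eqxx //.
pose c x := u x == u a.
have hc x y : e' x y -> c x != c y.
  move=> h; rewrite /c (He' _ _ h).
  case: (pm a x (allc x)) => ->; rewrite ?opprK eqxx ?(negbTE (neg_ne h2 ua0)) //.
split; last by exists c.
have [p' [pth uq lst]] : exists p', [/\ path e' a p', uniq (a :: p') & last a p' = b].
  case/connectP: cab => p pth ->; case/shortenP: pth => p' pth' uq _.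
  by exists p'.
have par : c b = c a (+) odd (size p').
  by rewrite -lst; exact (path_parity hc pth).
move: par; rewrite /c ub eqxx addTb => par.
have od : ~~ odd (size p') by move: par; case: (odd _).
have sz : (0 < size p')%N.
  by case: p' lst {pth uq par od} => //= ab; rewrite ab eqxx in nab.
exists (a :: p'); split.
  split => //.
  - rewrite /= rcons_path lst se eab andbT.
    by apply: sub_path pth => x y; rewrite /e' rem_E => /andP[].
  - rewrite /=; move: sz od; case: (size p') => [|[|n]] //.
by rewrite mem_head -lst next_last_uniq // eqxx orbT.
Qed.


Lemma backward (F : fieldType) (T : finType) (e : rel T) (a b : T) :
  (2%:R : F) != 0 ->
  simple_graph e -> connected_graph e -> e a b ->
  ((on_odd_cycle e a b /\ bipartite (remove_edge e a b)) \/
   (is_bridge e a b /\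
    exists v : T, component_bipartite (remove_edge e a b) v)) ->
  (exists u : T -> F, ZG_eq e (UG_mul e u u) (ZG_edge F a b)).
Proof.
move=> h2 [irr se] cg eab.
have neq x y : e x y -> x != y.
  by move=> exy; apply: contraTneq exy => ->; rewrite irr.
pose e' := remove_edge e a b.
have e'E x y : e' x y = e x y && ~~ (((x == a) && (y == b)) || ((x == b) && (y == a))).
  exact: rem_E.
have sqz : (0 : F) ^+ 2 = 0 by rewrite expr2 mulr0.
case=> [[[s [[cyc uq sz od] _]] [c hc]] | [br [v [c hc]]]].
  have cab : c a = c b.
    case: (eqVneq (c a) (c b)) => // hne; exfalso.
    have hc' x y : e x y -> c x != c y.
      move=> exy; case e'xy: (e' x y); first exact: hc.
      move: e'xy; rewrite e'E exy /= => /negbFE.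
      by case/orP=> /andP[/eqP-> /eqP->] //; rewrite eq_sym.
    case: s cyc uq sz od => // x0 s' /= cyc _ _ od.
    have := path_parity hc' cyc.
    rewrite last_rcons size_rcons /= od.
    by case: (c x0).
  pose u x : F := if c x == c a then 2%:R^-1 else - 2%:R^-1.
  have half : (2%:R^-1 : F) + 2%:R^-1 = 1.
    by have := mulVf h2; rewrite mulr_natr mulr2n.
  exists u => x y exy; rewrite (UG_mul_sq u se exy (neq _ _ exy)) /ZG_edge set2_eqE.
  case: ifP => hs.
    have -> : u x + u y = u a + u b.
      by case/orP: hs => /andP[/eqP-> /eqP->] //; rewrite addrC.
    by rewrite /u -cab eqxx half expr1n.
  have : c x != c y by apply: hc; rewrite rem_E exy hs.
  rewrite /u; case: (c x); case: (c y); case: (c a) => //= _;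
    by rewrite ?subrr ?addNr.
have sym' : connect_sym e' by apply: sym_connect_sym; apply: remove_edge_sym.
have one : ~~ (connect e' v a && connect e' v b).
  apply/negP=> /andP[va vb]; move/negP: br; apply.
  by apply: connect_trans vb; rewrite sym'.
pose u x : F := if connect e' v x then (if c x then 1 else -1) else 0.
exists u => x y exy; rewrite (UG_mul_sq u se exy (neq _ _ exy)) /ZG_edge set2_eqE.
case: ifP => hs.
  have -> : u x + u y = u a + u b.
    by case/orP: hs => /andP[/eqP-> /eqP->] //; rewrite addrC.
  rewrite /u; case: (reach_ab a b v cg) => h; rewrite h;
    move: one; rewrite h ?andbT /= => /negbTE ->;
    by case: (c _); rewrite ?addr0 ?add0r ?sqrrN expr1n.
have e'xy : e' x y by rewrite e'E exy hs.
rewrite /u; case cx: (connect e' v x).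
  have cy : connect e' v y by apply: connect_trans cx (connect1 e'xy).
  rewrite cy; move: (hc x y cx cy e'xy).
  by case: (c x); case: (c y) => //= _; rewrite ?subrr ?addNr.
case cy: (connect e' v y).
  have e'yx : e' y x by rewrite /e' remove_edge_sym.
  by move: cx; rewrite (connect_trans cy (connect1 e'yx)).
by rewrite addr0.
Qed.

Theorem proposition6p1 (F : fieldType) (T : finType) (e : rel T) (a b : T) :
  (2%:R : F) != 0 ->
  simple_graph e -> connected_graph e -> e a b ->
  (exists u : T -> F, ZG_eq e (UG_mul e u u) (ZG_edge F a b)) <->
  ((on_odd_cycle e a b /\ bipartite (remove_edge e a b)) \/
   (is_bridge e a b /\
    exists v : T, component_bipartite (remove_edge e a b) v)).
Proof.
move=> h2 sg cg eab; split; [exact: forward | exact: backward].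
Qed.
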